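(* Let $d\ge 1$ and $L\ge 1$ be integers and let $\Phi\in\mathbb{R}^{d\times d}$ be arbitrary. Consider the loss $$\mathcal{R}(W_1,\dots,W_L)=\tfrac12\|W_LW_{L-1}\cdots W_1-\Phi\|_F^2,\qquad W_l\in\mathbb{R}^{d\times d},$$ and the continuous-time gradient descent (gradient flow) $$\dot W_l(t)=-\nabla_l\mathcal{R}(t),\qquad l=1,\dots,L,\ t\ge 0,$$ started from the zero-asymmetric initialization $W_l(0)=I$ for $l=1,\dots,L-1$ and $W_L(0)=0$. Then $$\mathcal{R}(t)\le e^{-2t}\mathcal{R}(0)\qquad\text{for all } t\ge 0.$$
   Context: For $l_2\ge l_1$ write $W_{l_2:l_1}=W_{l_2}W_{l_2-1}\cdots W_{l_1}$, and an empty product (e.g. $W_{0:1}$ or $W_{L:L+1}$) is the identity matrix $I\in\mathbb{R}^{d\times d}$. The gradient of $\mathcal{R}$ with respect to $W_l$ is $\nabla_l\mathcal{R}=W_{L:l+1}^\intercal(W_{L:1}-\Phi)W_{l-1:1}^\intercal$. $\mathcal{R}(t)$ denotes $\mathcal{R}(W_1(t),\dots,W_L(t))$ and $\nabla_l\mathcal{R}(t)$ the gradient evaluated at $(W_1(t),\dots,W_L(t))$. $\|\cdot\|_F$ is the Frobenius norm. *)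

(* Defs.v *)
From HB Require Import structures.
From mathcomp Require Import all_boot all_order all_algebra.
From mathcomp Require Import all_classical all_reals all_analysis.
Set Implicit Arguments. Unset Strict Implicit. Unset Printing Implicit Defensive.
Import Order.TTheory GRing.Theory Num.Theory.
Import numFieldNormedType.Exports.
Local Open Scope ring_scope.

(* Layers are indexed by natural numbers; only indices 1..L are used. *)

(* W_{l2:l1} = W_{l2} W_{l2-1} ... W_{l1}; identity when l2 < l1. *)
Definition Wprod (R : realType) (d : nat) (W : nat -> 'M[R]_d) (l2 l1 : nat)
  : 'M[R]_d :=
  \big[mulmx/1%:M]_(k <- rev (iota l1 (l2.+1 - l1))) W k.

Definition loss (R : realType) (d L : nat) (Phi : 'M[R]_d) (W : nat -> 'M[R]_d)
  : R :=
  2^-1 * \sum_(i < d) \sum_(j < d) ((Wprod W L 1 - Phi) i j) ^+ 2.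

Definition grad (R : realType) (d L : nat) (Phi : 'M[R]_d) (W : nat -> 'M[R]_d)
  (l : nat) : 'M[R]_d :=
  (Wprod W L l.+1)^T *m (Wprod W L 1 - Phi) *m (Wprod W l.-1 1)^T.

(* Main.v *)
Require Import Defs.
From HB Require Import structures.
From mathcomp Require Import all_boot all_order all_algebra.
From mathcomp Require Import all_classical all_reals all_analysis.
From mathcomp Require Import lra ring.
Import Order.TTheory GRing.Theory Num.Theory.
Import numFieldNormedType.Exports.
Local Open Scope classical_set_scope.
Local Open Scope ring_scope.
Set Implicit Arguments. Unset Strict Implicit. Unset Printing Implicit Defensive.


Section Alg.
Variable R : realType.
Variable d : nat.
Implicit Types A B X Y Z M : 'M[R]_d.

Definition ip A B := \tr (A^T *m B).

Lemma ipE A B : ip A B = \sum_i \sum_j A i j * B i j.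
Proof.
rewrite /ip /mxtrace exchange_big /=; apply: eq_bigr => j _.
by rewrite mxE; apply: eq_bigr => i _; rewrite mxE.
Qed.

Lemma ip_mulr X Y Z : ip X (Y *m Z) = ip (X *m Z^T) Y.
Proof.
by rewrite /ip trmx_mul trmxK mulmxA mxtrace_mulC !mulmxA.
Qed.

Lemma ip_mull X Y Z : ip X (Y *m Z) = ip (Y^T *m X) Z.
Proof. by rewrite /ip trmx_mul trmxK mulmxA. Qed.

Lemma ipD X Y Z : ip X (Y + Z) = ip X Y + ip X Z.
Proof. by rewrite /ip mulmxDr mxtraceD. Qed.

Lemma ipN X Y : ip X (- Y) = - ip X Y.
Proof. by rewrite /ip mulmxN; exact: raddfN. Qed.

Lemma ip0 X : ip X 0 = 0.
Proof. by rewrite /ip mulmx0; exact: raddf0. Qed.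

Lemma ipC X Y : ip X Y = ip Y X.
Proof. by rewrite /ip -mxtrace_tr trmx_mul trmxK. Qed.

Lemma ip_ge0 X : 0 <= ip X X.
Proof. rewrite ipE; apply: sumr_ge0 => i _; apply: sumr_ge0 => j _; by rewrite -expr2 sqr_ge0. Qed.

Definition nrm (u : 'rV[R]_d) := \sum_j u 0 j ^+ 2.

Lemma nrm_ge0 u : 0 <= nrm u.
Proof. by apply: sumr_ge0 => j _; exact: sqr_ge0. Qed.

Lemma nrmE u : nrm u = (u *m u^T) 0 0.
Proof. by rewrite mxE; apply: eq_bigr => j _; rewrite mxE expr2. Qed.

Lemma nrm_eq0 u : nrm u = 0 -> u = 0.
Proof.
move=> /eqP; rewrite psumr_eq0; last by move=> j _; exact: sqr_ge0.
move=> /allP H; apply/rowP => j; rewrite mxE.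
by have := H j (mem_index_enum _); rewrite sqrf_eq0 => /eqP.
Qed.

Lemma ipr_le u v : 2 * (u *m v^T) 0 0 <= nrm u + nrm v.
Proof.
rewrite mxE /nrm -big_split /= mulr_sumr; apply: ler_sum => j _.
rewrite mxE; have := sqr_ge0 (u 0 j - v 0 j); rewrite sqrrB; lra.
Qed.

Definition Cond M := forall u : 'rV[R]_d, nrm u <= nrm (u *m M).

Lemma CondM M N : Cond M -> Cond N -> Cond (M *m N).
Proof. by move=> HM HN u; rewrite mulmxA; apply: le_trans (HM u) (HN _). Qed.

Lemma Cond1 : Cond 1%:M.
Proof. by move=> u; rewrite mulmx1. Qed.

Lemma Cond_unit M : Cond M -> M \in unitmx.
Proof.
move=> HM; rewrite -row_free_unit -kermx_eq0; apply/eqP/row_matrixP => i.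
rewrite row0; apply: nrm_eq0; apply/le_anti; rewrite nrm_ge0 andbT.
by apply: le_trans (HM _) _; rewrite -row_mul mulmx_ker row0 /nrm big1 // => j _; rewrite mxE expr0n.
Qed.

Lemma CondT M : Cond M -> Cond M^T.
Proof.
move=> HM; have uM := Cond_unit HM; set B := invmx M.
have BM : B *m M = 1%:M by exact: mulVmx.
have MB : M *m B = 1%:M by exact: mulmxV.
have S1 : forall v, nrm (v *m B) <= nrm v.
  by move=> v; apply: le_trans (HM _) _; rewrite -mulmxA BM mulmx1.
have S2 : forall v, nrm (v *m B^T) <= nrm v.
  move=> v; set w := v *m B^T.
  have E : nrm w = (v *m (w *m B)^T) 0 0.
    by rewrite nrmE [in RHS]trmx_mul mulmxA.
  have := ipr_le v (w *m B); rewrite -E; have := S1 w; lra.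
move=> u; rewrite {1}(_ : u = (u *m M^T) *m B^T); first exact: S2.
by rewrite -mulmxA -trmx_mul BM trmx1 mulmx1.
Qed.
End Alg.


Section WP.
Variable R : realType.
Variable d : nat.
Implicit Types W : nat -> 'M[R]_d.

Lemma big_rcons_mx (F : nat -> 'M[R]_d) s x :
  \big[mulmx/1%:M]_(k <- rcons s x) F k = (\big[mulmx/1%:M]_(k <- s) F k) *m F x.
Proof.
elim: s => [|y s IH] /=; first by rewrite big_cons !big_nil mul1mx mulmx1.
by rewrite !big_cons IH mulmxA.
Qed.

Lemma Wprod_nil W n m : (n < m)%N -> Wprod W n m = 1%:M.
Proof. by move=> H; rewrite /Wprod (_ : n.+1 - m = 0)%N ?big_nil //; apply/eqP; rewrite subn_eq0. Qed.

Lemma WprodSl W n m : (m <= n.+1)%N -> Wprod W n.+1 m = W n.+1 *m Wprod W n m.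
Proof.
move=> H; rewrite /Wprod (_ : n.+2 - m = (n.+1 - m) + 1)%N; last by rewrite addn1 subSn.
rewrite iotaD rev_cat /= big_cons; congr (W _ *m _).
by rewrite subnKC.
Qed.

Lemma WprodSr W n m : (m <= n)%N -> Wprod W n m = Wprod W n m.+1 *m W m.
Proof.
move=> H; rewrite /Wprod (_ : n.+1 - m = (n.+1 - m.+1).+1)%N; last by rewrite subSS subSn.
by rewrite /= rev_cons big_rcons_mx.
Qed.
End WP.


Section D.
Variable R : realType.

Lemma dD (f g : R -> R) (t a b : R) : is_derive t 1 f a -> is_derive t 1 g b ->
  is_derive t 1 (fun s => f s + g s) (a + b).
Proof. move=> ? ?; exact: is_deriveD. Qed.

Lemma dN (f : R -> R) (t a : R) : is_derive t 1 f a ->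
  is_derive t 1 (fun s => - f s) (- a).
Proof. move=> ?; exact: is_deriveN. Qed.

Lemma dMul (f g : R -> R) (t a b : R) : is_derive t 1 f a -> is_derive t 1 g b ->
  is_derive t 1 (fun s => f s * g s) (f t * b + g t * a).
Proof. move=> Hf Hg; have := is_deriveM Hf Hg; rewrite /GRing.scale /=. move=> H; exact: H. Qed.

Lemma dC (t c : R) : is_derive t 1 (fun _ : R => c) 0.
Proof. exact: is_derive_cst. Qed.

Lemma dsum n (f : 'I_n -> R -> R) (t : R) (a : 'I_n -> R) : (forall k, is_derive t 1 (f k) (a k)) ->
  is_derive t 1 (fun s => \sum_(k < n) f k s) (\sum_(k < n) a k).
Proof.
elim: n f a => [|n IH] f a H.
  under eq_fun do rewrite big_ord0. rewrite big_ord0; exact: dC.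
under eq_fun do rewrite big_ord_recr /=. rewrite big_ord_recr /=.
apply: dD => //; exact: (IH (fun k => f (widen_ord (leqnSn n) k))).
Qed.
End D.


Section D.
Variable R : realType.

Lemma nonincr (f df : R -> R) :
  (forall t : R, 0 < t -> is_derive t 1 f (df t)) -> (forall t : R, 0 < t -> df t <= 0) ->
  f x @[x --> 0^'+] --> f 0 -> forall t : R, 0 <= t -> f t <= f 0.
Proof.
move=> Hd Hn Hc t; rewrite le_eqVlt => /orP[/eqP <- //|t0].
have key : forall s, 0 < s -> s <= t -> f t <= f s.
  move=> s s0 st.
  apply: (@ler0_derive1_le_oo R f 0 (t + 1)).
  - move=> x; rewrite in_itv /= => /andP[x0 _]; have [] := Hd x x0; done.
  - move=> x; rewrite in_itv /= => /andP[x0 _]; rewrite derive1E.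
    by have [_ ->] := Hd x x0; exact: Hn.
  - move=> x /set_mem /=; rewrite in_itv /= => /andP[x0 _].
    apply: differentiable_continuous; apply/derivable1_diffP.
    by have [] := Hd x x0.
  - by rewrite in_itv /= t0 /=; lra.
  - by rewrite in_itv /= s0 /=; lra.
  - exact: st.
apply: (@ler_cvg_to _ _ _ _ (fun _ => f t) f _ _ (cvg_cst _) Hc).
near=> s; apply: key.
  by near: s; exact: nbhs_right_gt.
by apply/ltW; near: s; exact: nbhs_right_lt.
Unshelve. all: end_near.
Qed.
End D.


Section M.
Variable R : realType.
Variable d : nat.

Lemma dtrans (f : R -> R) (t a b : R) : is_derive t 1 f a -> a = b -> is_derive t 1 f b.
Proof. by move=> ? <-. Qed.

Definition DM (t : R) (M : R -> 'M[R]_d) (M' : 'M[R]_d) :=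
  forall i j, is_derive t 1 (fun s => M s i j) (M' i j).

Lemma DM_mul t A A' B B' : DM t A A' -> DM t B B' ->
  DM t (fun s => A s *m B s) (A' *m B t + A t *m B').
Proof.
move=> HA HB i j; under eq_fun do rewrite mxE.
apply: dtrans.
  apply: (@dsum R d (fun k s => A s i k * B s k j) t (fun k => A t i k * B' k j + B t k j * A' i k)).
  by move=> k; apply: dMul.
by rewrite !mxE -big_split /=; apply: eq_bigr => k _; rewrite mulrC [B t k j * _]mulrC addrC.
Qed.

Lemma DM_add t A A' B B' : DM t A A' -> DM t B B' ->
  DM t (fun s => A s + B s) (A' + B').
Proof. by move=> HA HB i j; under eq_fun do rewrite mxE; rewrite mxE; apply: dD. Qed.

Lemma DM_opp t A A' : DM t A A' -> DM t (fun s => - A s) (- A').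
Proof. by move=> HA i j; under eq_fun do rewrite mxE; rewrite mxE; apply: dN. Qed.

Lemma DM_tr t A A' : DM t A A' -> DM t (fun s => (A s)^T) (A'^T).
Proof. by move=> HA i j; under eq_fun do rewrite mxE; rewrite mxE. Qed.

Lemma DM_cst t (C : 'M[R]_d) : DM t (fun _ => C) 0.
Proof. by move=> i j; rewrite mxE; exact: dC. Qed.

Definition RC (M : R -> 'M[R]_d) := forall i j, M x i j @[x --> 0^'+] --> M 0 i j.

Lemma cD (f g : R -> R) (a b : R) : f x @[x --> 0^'+] --> a -> g x @[x --> 0^'+] --> b ->
  (f x + g x) @[x --> 0^'+] --> a + b.
Proof. move=> ? ?; exact: cvgD. Qed.

Lemma cM (f g : R -> R) (a b : R) : f x @[x --> 0^'+] --> a -> g x @[x --> 0^'+] --> b ->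
  (f x * g x) @[x --> 0^'+] --> a * b.
Proof. move=> ? ?; exact: cvgM. Qed.

Lemma cN (f : R -> R) (a : R) : f x @[x --> 0^'+] --> a -> (- f x) @[x --> 0^'+] --> - a.
Proof. move=> ?; exact: cvgN. Qed.

Lemma cC (c : R) : (fun _ : R => c) @ 0^'+ --> c.
Proof. exact: cvg_cst. Qed.

Lemma csum n (f : 'I_n -> R -> R) (a : 'I_n -> R) :
  (forall k, f k x @[x --> 0^'+] --> a k) ->
  (\sum_(k < n) f k x) @[x --> 0^'+] --> \sum_(k < n) a k.
Proof.
elim: n f a => [|n IH] f a H.
  under eq_fun do rewrite big_ord0. rewrite big_ord0; exact: cC.
under eq_fun do rewrite big_ord_recr /=. rewrite big_ord_recr /=.
apply: cD => //; exact: (IH (fun k => f (widen_ord (leqnSn n) k))).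
Qed.

Lemma RC_mul A B : RC A -> RC B -> RC (fun s => A s *m B s).
Proof.
move=> HA HB i j; under eq_fun do rewrite mxE; rewrite mxE.
by apply: (@csum d (fun k x => A x i k * B x k j) (fun k => A 0 i k * B 0 k j)) => k; apply: cM.
Qed.

Lemma RC_add A B : RC A -> RC B -> RC (fun s => A s + B s).
Proof. by move=> HA HB i j; under eq_fun do rewrite mxE; rewrite mxE; apply: cD. Qed.

Lemma RC_opp A : RC A -> RC (fun s => - A s).
Proof. by move=> HA i j; under eq_fun do rewrite mxE; rewrite mxE; apply: cN. Qed.

Lemma RC_tr A : RC A -> RC (fun s => (A s)^T).
Proof. move=> HA i j; rewrite mxE; under eq_fun do rewrite mxE; exact: HA. Qed.

Lemma RC_cst (C : 'M[R]_d) : RC (fun _ => C).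
Proof. by move=> i j; exact: cC. Qed.
End M.

Section F.
Variable R : realType.
Variable d : nat.

Fixpoint Dp (Wt Wd : nat -> 'M[R]_d) n :=
  if n is n'.+1 then Wd n *m Wprod Wt n' 1 + Wt n *m Dp Wt Wd n' else 0.

Lemma DM_ext t (M N : R -> 'M[R]_d) M' : (forall s, M s = N s) -> DM t M M' -> DM t N M'.
Proof. by move=> H; have -> : M = N by apply/funext. Qed.

Lemma RC_ext (M N : R -> 'M[R]_d) : (forall s, M s = N s) -> RC M -> RC N.
Proof. by move=> H; have -> : M = N by apply/funext. Qed.

Lemma DM_Wprod t (W : nat -> R -> 'M[R]_d) Wd n :
  (forall l, (1 <= l <= n)%N -> DM t (W l) (Wd l)) ->
  DM t (fun s => Wprod (fun k => W k s) n 1) (Dp (fun k => W k t) Wd n).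
Proof.
elim: n => [|n IH] H /=.
  by apply: (@DM_ext t (fun _ => 1%:M)) => [s|]; [rewrite Wprod_nil|exact: DM_cst].
apply: (@DM_ext t (fun s => W n.+1 s *m Wprod (fun k => W k s) n 1)).
  by move=> s; rewrite WprodSl.
apply: DM_mul; first by apply: H; rewrite leqnn.
by apply: IH => l /andP[l1 ln]; apply: H; rewrite l1 (leq_trans ln).
Qed.

Lemma RC_Wprod (W : nat -> R -> 'M[R]_d) n :
  (forall l, (1 <= l <= n)%N -> RC (W l)) ->
  RC (fun s => Wprod (fun k => W k s) n 1).
Proof.
elim: n => [|n IH] H /=.
  by apply: (@RC_ext (fun _ => 1%:M)) => [s|]; [rewrite Wprod_nil|exact: RC_cst].
apply: (@RC_ext (fun s => W n.+1 s *m Wprod (fun k => W k s) n 1)).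
  by move=> s; rewrite WprodSl.
apply: RC_mul; first by apply: H; rewrite leqnn.
by apply: IH => l /andP[l1 ln]; apply: H; rewrite l1 (leq_trans ln).
Qed.

Lemma ipDp (Wt Wd : nat -> 'M[R]_d) n X :
  ip X (Dp Wt Wd n) =
  \sum_(l < n) ip ((Wprod Wt n l.+2)^T *m X *m (Wprod Wt l 1)^T) (Wd l.+1).
Proof.
elim: n X => [|n IH] X /=; first by rewrite big_ord0 ip0.
rewrite ipD ip_mulr ip_mull IH big_ord_recr /= addrC; congr (_ + _).
  by rewrite [Wprod Wt n.+1 n.+2]Wprod_nil // trmx1 mul1mx.
apply: eq_bigr => l _; congr (ip _ _).
by rewrite (@WprodSl _ _ _ n l.+2 (ltn_ord l)) trmx_mul !mulmxA.
Qed.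

Lemma DM_ip t (A B : R -> 'M[R]_d) A' B' : DM t A A' -> DM t B B' ->
  is_derive t 1 (fun x => ip (A x) (B x)) (ip A' (B t) + ip (A t) B').
Proof.
move=> HA HB; under eq_fun do rewrite ipE.
apply: dtrans.
  apply: (@dsum R d _ t (fun i => \sum_j (A t i j * B' i j + B t i j * A' i j))) => i.
  apply: (@dsum R d _ t (fun j => (A t i j * B' i j + B t i j * A' i j))) => j.
  exact: dMul.
rewrite !ipE -big_split; apply: eq_bigr => i _; rewrite -big_split; apply: eq_bigr => j _.
by rewrite addrC; congr (_ + _); rewrite mulrC.
Qed.

Lemma RC_ip (A B : R -> 'M[R]_d) : RC A -> RC B ->
  ip (A x) (B x) @[x --> 0^'+] --> ip (A 0) (B 0).
Proof.
move=> HA HB; under eq_fun do rewrite ipE. rewrite ipE.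
apply: (@csum R d _ (fun i => \sum_j A 0 i j * B 0 i j)) => i.
apply: (@csum R d _ (fun j => A 0 i j * B 0 i j)) => j.
exact: cM.
Qed.

Lemma ip_row (A : 'M[R]_d) : ip A A = \sum_i nrm (row i A).
Proof.
rewrite ipE; apply: eq_bigr => i _; apply: eq_bigr => j _.
by rewrite mxE expr2.
Qed.

Lemma ip_Cond (E Q : 'M[R]_d) : Cond Q -> ip E E <= ip (E *m Q) (E *m Q).
Proof.
move=> HQ; rewrite !ip_row; apply: ler_sum => i _; rewrite row_mul; exact: HQ.
Qed.

Lemma loss_ip L Phi (W : nat -> 'M[R]_d) :
  loss L Phi W = 2^-1 * ip (Wprod W L 1 - Phi) (Wprod W L 1 - Phi).
Proof.
rewrite /loss ipE; congr (_ * _); apply: eq_bigr => i _; apply: eq_bigr => j _.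
Qed.

Lemma tr_opp (A : 'M[R]_d) : (- A)^T = - A^T.
Proof. by apply/matrixP => i j; rewrite !mxE. Qed.

Lemma balance_alg (W1 W0 g1 g0 : 'M[R]_d) : W1^T *m g1 = g0 *m W0^T ->
  ((- g1)^T *m W1 + W1^T *m (- g1)) + - ((- g0) *m W0^T + W0 *m (- g0)^T) = 0.
Proof.
move=> H.
have H1 : g1^T *m W1 = (g0 *m W0^T)^T by rewrite -H trmx_mul trmxK.
have H2 : W0 *m g0^T = (g0 *m W0^T)^T by rewrite trmx_mul trmxK.
rewrite !tr_opp !mulNmx !mulmxN H1 H2 H.
set M := g0 *m W0^T. set N := M^T. by rewrite !opprD !opprK -opprD [M + N]addrC addNr.
Qed.
End F.

Unset Implicit Arguments. Set Strict Implicit. Set Printing Implicit Defensive.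

Lemma nrm_mul (R : realType) d (u : 'rV[R]_d) (A : 'M[R]_d) :
  nrm (u *m A) = (u *m (A *m A^T) *m u^T) 0 0.
Proof. by rewrite nrmE trmx_mul !mulmxA. Qed.

Lemma nrm_mulT (R : realType) d (u : 'rV[R]_d) (A : 'M[R]_d) :
  nrm (u *m A^T) = (u *m (A^T *m A) *m u^T) 0 0.
Proof. by rewrite nrm_mul trmxK. Qed.

Lemma dexp2 (R : realType) (s : R) : is_derive s 1 (fun x => expR (2 * x)) (expR (2 * s) * 2).
Proof.
have Hid : is_derive s (1:R) (fun x : R => x) (1:R) by exact: is_derive_id.
have H2 : is_derive s 1 (fun x : R => 2 * x) 2.
  by have := dMul (dC s 2) Hid; rewrite mulr1 mulr0 addr0.
exact: (is_derive1_comp (is_derive_expR _) H2).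
Qed.

Theorem theorem1 (R : realType) (d L : nat) (Phi : 'M[R]_d)
  (W : nat -> R -> 'M[R]_d) :
  (0 < d)%N -> (0 < L)%N ->
  (* zero-asymmetric initialization *)
  (forall l, (1 <= l < L)%N -> W l 0 = 1%:M) ->
  W L 0 = 0 ->
  (* gradient flow for t > 0, entrywise *)
  (forall l, (1 <= l <= L)%N -> forall t : R, 0 < t -> forall i j : 'I_d,
     is_derive t 1 (fun s => W l s i j) (- grad L Phi (fun k => W k t) l i j)) ->
  (* right-continuity at t = 0 *)
  (forall l, (1 <= l <= L)%N -> forall i j : 'I_d,
     W l x i j @[x --> 0^'+] --> W l 0 i j) ->
  forall t : R, 0 <= t ->
    loss L Phi (fun k => W k t) <= expR (- 2 * t) * loss L Phi (fun k => W k 0).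
Proof.
move=> d0 L0 Hinit HL Hflow Hrc.
case: L L0 Hinit HL Hflow Hrc => [//|L'] _ Hinit HL Hflow Hrc.
have F1 : forall l, (1 <= l <= L'.+1)%N -> forall s : R, 0 < s ->
    DM s (W l) (- grad L'.+1 Phi (fun k => W k s) l).
  by move=> l Hl s s0 i j; rewrite mxE; exact: Hflow.
have Gid : forall s k, (1 <= k)%N -> (k < L'.+1)%N ->
    (W k.+1 s)^T *m grad L'.+1 Phi (fun k => W k s) k.+1
    = grad L'.+1 Phi (fun k => W k s) k *m (W k s)^T.
  move=> s [//|k] _ kL; rewrite /grad /=.
  rewrite !mulmxA -trmx_mul -(WprodSr _ kL) -!mulmxA -trmx_mul.
  by rewrite -(@WprodSl _ _ _ k 1).
pose G k s := (W k.+1 s)^T *m W k.+1 s - W k s *m (W k s)^T.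
have RW : forall l, (1 <= l <= L'.+1)%N -> RC (W l) by move=> l Hl i j; exact: Hrc.
have Bal : forall k, (1 <= k)%N -> (k < L'.+1)%N -> forall s : R, 0 <= s -> G k s = G k 0.
  move=> k k1 kL s s0.
  have l1 : (1 <= k.+1 <= L'.+1)%N by rewrite kL.
  have l0 : (1 <= k <= L'.+1)%N by rewrite k1 ltnW.
  have DG : forall x : R, 0 < x -> DM x (G k) 0.
    move=> x x0.
    have := DM_add (DM_mul (DM_tr (F1 _ l1 x x0)) (F1 _ l1 x x0))
       (DM_opp (DM_mul (F1 _ l0 x x0) (DM_tr (F1 _ l0 x x0)))).
    by rewrite balance_alg // Gid.
  have RG : RC (G k).
    exact: (RC_add (RC_mul (RC_tr (RW _ l1)) (RW _ l1))
       (RC_opp (RC_mul (RW _ l0) (RC_tr (RW _ l0))))).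
  apply/matrixP => i j; apply/le_anti/andP; split.
    apply: (@nonincr R (fun x => G k x i j) (fun _ => 0)) => //.
      by move=> x x0; have := DG x x0 i j; rewrite mxE.
  rewrite -lerN2.
  apply: (@nonincr R (fun x => - G k x i j) (fun _ => 0)) => //.
    by move=> x x0; have := dN (DG x x0 i j); rewrite mxE oppr0.
  exact: cN (RG i j).
have G0a : forall k, (1 <= k)%N -> (k.+1 < L'.+1)%N -> G k 0 = 0.
  move=> k k1 kL; rewrite /G !Hinit ?k1 ?kL ?(ltnW kL) //.
  by rewrite trmx1 mulmx1 subrr.
have G0b : (1 <= L')%N -> G L' 0 = - 1%:M.
  move=> L1; rewrite /G HL Hinit; last by rewrite L1 /=.
  by rewrite trmx0 mulmx0 trmx1 mulmx1 sub0r.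
have CW : forall s : R, 0 <= s -> forall j k, (1 <= k)%N -> (k + j = L')%N -> Cond (W k s)^T.
  move=> s s0; elim=> [|j IH] k k1.
    rewrite addn0 => kL; subst k; apply: CondT => u.
    have := Bal L' k1 (leqnn _) s s0; rewrite G0b // => /eqP.
    rewrite subr_eq addrC -subr_eq opprK => /eqP E; rewrite nrm_mul -E.
    rewrite mulmxDr mulmxDl mxE -nrm_mulT mulmx1 -nrmE.
    by rewrite lerDr nrm_ge0.
  rewrite addnS -addSn => kL.
  have C1 := IH k.+1 (leq_trans k1 (leqnSn _)) kL.
  apply: CondT => u.
  have kL1 : (k.+1 < L'.+1)%N by rewrite -kL ltnS leq_addr.
  have := Bal k k1 (ltnW kL1) s s0; rewrite G0a // => /eqP; rewrite subr_eq0 => /eqP E.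
  by rewrite nrm_mul -E -nrm_mulT; apply: C1.
have CP : forall s : R, 0 <= s -> forall n, (n <= L')%N ->
    Cond (Wprod (fun k => W k s) n 1)^T.
  move=> s s0; elim=> [|n IH] nL.
    by rewrite Wprod_nil // trmx1; exact: Cond1.
  rewrite WprodSl // trmx_mul; apply: CondM; first exact: IH (ltnW nL).
  exact: (CW s s0 (L' - n.+1)%N n.+1 isT (subnKC nL)).
pose E x := Wprod (fun k => W k x) L'.+1 1 - Phi.
have RE : RC E.
  exact: (RC_add (@RC_Wprod R d W L'.+1 RW) (RC_opp (RC_cst (C:=Phi)))).
pose ell x := loss L'.+1 Phi (fun k => W k x).
have ellE : forall x, ell x = 2^-1 * ip (E x) (E x) by move=> x; rewrite /ell loss_ip.
have Rell : ell x @[x --> 0^'+] --> ell 0.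
  have -> : ell = (fun x => 2^-1 * ip (E x) (E x)) by apply/funext => x; exact: ellE.
  by apply: cM; [exact: cC | exact: RC_ip].
have Dell : forall s : R, 0 < s -> exists2 e, is_derive s 1 ell e & e <= - 2 * ell s.
  move=> s s0.
  pose Wd l := - grad L'.+1 Phi (fun k => W k s) l.
  have DE : DM s E (Dp (fun k => W k s) Wd L'.+1 + - 0).
    apply: (DM_add (DM_Wprod (fun l Hl => F1 l Hl s s0)) (DM_opp (@DM_cst R d s Phi))).
  have := dMul (dC s (2^-1)) (DM_ip DE DE).
  have -> : (fun x => 2^-1 * ip (E x) (E x)) = ell by apply/funext => x; rewrite ellE.
  move=> H; eexists; first exact: H.
  rewrite mulr0 addr0 subr0 [ip (Dp _ _ _) _]ipC.
  suff Hx : ip (E s) (Dp (fun k => W k s) Wd L'.+1) <= - ip (E s) (E s).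
    by rewrite ellE; lra.
  rewrite ipDp big_ord_recr /=.
  have -> : Wprod (fun k => W k s) L'.+1 L'.+2 = 1%:M by rewrite Wprod_nil.
  rewrite trmx1 mul1mx /Wd ipN.
  apply: (@le_trans _ _ (0 + - ip (E s *m (Wprod (fun k => W k s) L' 1)^T)
                              (E s *m (Wprod (fun k => W k s) L' 1)^T))).
    apply: lerD.
      apply: sumr_le0 => l _; rewrite ipN oppr_le0; exact: ip_ge0.
    by rewrite /grad /= [Wprod _ L'.+1 L'.+2]Wprod_nil // trmx1 mul1mx.
  rewrite add0r lerN2; apply: ip_Cond; apply: CP (ltW s0) _ (leqnn _).
move=> t t0.
pose g x := expR (2 * x) * ell x.
have Hg : g t <= g 0.
  apply: (@nonincr R g (fun s => expR (2 * s) * 'D_1 ell s + ell s * (expR (2 * s) * 2))) => //.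
  - move=> s s0; have [e He _] := Dell s s0.
    have De : 'D_1 ell s = e by case: He.
    by rewrite De; have := dMul (dexp2 R s) He.
  - move=> s s0; have [e He Hle] := Dell s s0.
    have De : 'D_1 ell s = e by case: He.
    rewrite De.
    have ep := expR_gt0 (2 * s).
    have : expR (2 * s) * (e + 2 * ell s) <= 0.
      by rewrite pmulr_rle0 //; lra.
    by rewrite mulrDr; lra.
  - apply: cM; last exact: Rell.
    apply: cvg_at_right_filter.
    have [Dd _] := dexp2 R 0.
    by have := differentiable_continuous (iffLR (derivable1_diffP _ _) Dd).
move: Hg; rewrite /g mulr0 expR0 mul1r => Hg.
rewrite mulNr -/(ell t) -/(ell 0).
have -> : ell t = expR (- (2 * t)) * (expR (2 * t) * ell t).
  by rewrite mulrA [expR (- _) * _]mulrC expRxMexpNx_1 mul1r.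
by apply: ler_wpM2l => //; exact: expR_ge0.
Qed.
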